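(* For every $\beta\in\Psi^+$ and $i\in\{0,1\}$ there exist $a_1,a_2\in W({\rm G}_2)$, $j\in\{0,1\}$ and $t\in\mathbb{Z}$ such that $e_\beta e_i=\delta^ta_1e_ja_2$ in ${\rm Br}({\rm G}_2)$.
   Context: Let $\delta$ be an indeterminate. ${\rm Br}({\rm G}_2)$ is the $\mathbb{Z}[\delta^{\pm1}]$-algebra generated by $r_0,r_1,e_0,e_1$ subject to the following relations: - $r_0^2=r_1^2=1$; - $r_ie_i=e_ir_i=e_i$ for $i=0,1$; - $e_0^2=\delta^3e_0$ and $e_1^2=\delta e_1$; - $r_0e_1e_0=r_1e_0$ and $e_0e_1r_0=e_0r_1$; - $e_1r_0e_1r_0e_1=e_1$ and $e_1r_0e_1r_0r_1=e_1r_0r_1r_0$; - $e_0r_1e_0=\delta^2e_0$; - $r_1r_0e_1r_0e_1=r_0r_1r_0e_1$; - $(r_1r_0)^6=1$. Let $\Psi$ be a root system of type ${\rm G}_2$ with simple roots $\beta_0$ (short) and $\beta_1$ (long), and positive roots $\Psi^+=\{\beta_0,\beta_1,\beta_0+\beta_1,2\beta_0+\beta_1,3\beta_0+\beta_1,3\beta_0+2\beta_1\}$. $W({\rm G}_2)$ is generated by the reflections $s_0,s_1$ in $\beta_0,\beta_1$. The subgroup of units of ${\rm Br}({\rm G}_2)$ generated by $r_0,r_1$ is isomorphic to $W({\rm G}_2)$ via $r_i\mapsto s_i$, and elements of $W({\rm G}_2)$ are identified with their images. For $\beta\in\Psi^+$, choose $w\in W({\rm G}_2)$ and $k\in\{0,1\}$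 with $w\beta_k=\beta$, and set $e_\beta=we_kw^{-1}$. This is independent of the choice of $w$ and $k$. *)

(* Defs.v *)
From HB Require Import structures.
From mathcomp Require Import all_boot all_order all_algebra.
Set Implicit Arguments. Unset Strict Implicit. Unset Printing Implicit Defensive.
Import Order.TTheory GRing.Theory Num.Theory.
Local Open Scope ring_scope.

(* A root is encoded by its coordinates (c0, c1) in the basis beta_0 (short),
   beta_1 (long): c0 * beta_0 + c1 * beta_1.  Pairings with coroots:
   <beta_0, beta_0^v> = 2, <beta_1, beta_0^v> = -3,
   <beta_0, beta_1^v> = -1, <beta_1, beta_1^v> = 2. *)
Definition G2root := (int * int)%type.

Definition simple_root (k : 'I_2) : G2root :=
  if k == ord0 then (1%:Z, 0%:Z) else (0%:Z, 1%:Z).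

(* s_i x = x - <x, beta_i^v> beta_i *)
Definition refl (i : 'I_2) (x : G2root) : G2root :=
  if i == ord0 then (x.1 - (2 * x.1 - 3 * x.2), x.2)
  else (x.1, x.2 - (2 * x.2 - x.1)).

(* An element of W(G2) is given by a word [:: i1; ...; in] in the generators,
   standing for s_{i1} s_{i2} ... s_{in}. *)
Definition wact (w : seq 'I_2) (x : G2root) : G2root := foldr refl x w.

Definition pos_roots : seq G2root :=
  [:: (1%:Z, 0%:Z); (0%:Z, 1%:Z); (1%:Z, 1%:Z); (2%:Z, 1%:Z);
      (3%:Z, 1%:Z); (3%:Z, 2%:Z)].

(* A Z[delta^{+-1}]-algebra is a ring A together with a central unit d (the
   image of delta) with inverse dinv.  br_rels says that r0 r1 e0 e1 satisfy
   the defining relations of Br(G2).  An identity holds in Br(G2) iff it holds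
   for every such (A, d, r0, r1, e0, e1), Br(G2) being the universal one. *)
Definition br_rels (A : pzRingType) (d dinv r0 r1 e0 e1 : A) : Prop :=
     d * dinv = 1 /\ dinv * d = 1 /\ (forall x : A, d * x = x * d)
  /\ r0 * r0 = 1 /\ r1 * r1 = 1
  /\ r0 * e0 = e0 /\ e0 * r0 = e0 /\ r1 * e1 = e1 /\ e1 * r1 = e1
  /\ e0 * e0 = d ^+ 3 * e0 /\ e1 * e1 = d * e1
  /\ r0 * e1 * e0 = r1 * e0 /\ e0 * e1 * r0 = e0 * r1
  /\ e1 * r0 * e1 * r0 * e1 = e1 /\ e1 * r0 * e1 * r0 * r1 = e1 * r0 * r1 * r0
  /\ e0 * r1 * e0 = d ^+ 2 * e0
  /\ r1 * r0 * e1 * r0 * e1 = r0 * r1 * r0 * e1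
  /\ (r1 * r0) ^+ 6 = 1.

Definition gen (A : pzRingType) (x0 x1 : A) (i : 'I_2) : A :=
  if i == ord0 then x0 else x1.

Definition wev (A : pzRingType) (r0 r1 : A) (w : seq 'I_2) : A :=
  \prod_(i <- w) gen r0 r1 i.

Definition dpow (A : pzRingType) (d dinv : A) (t : int) : A :=
  match t with
  | Posz n => d ^+ n
  | Negz n => dinv ^+ n.+1
  end.

(* e_beta = w e_k w^{-1}, where w beta_k = beta; w^{-1} is the reversed word
   since the generators are involutions. *)
Definition ebeta (A : pzRingType) (r0 r1 e0 e1 : A) (w : seq 'I_2) (k : 'I_2) : A :=
  wev r0 r1 w * gen e0 e1 k * wev r0 r1 (rev w).

(* Main.v *)
Require Import Defs.
From HB Require Import structures.
From mathcomp Require Import all_boot all_order all_algebra.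
Import GRing.Theory.
Local Open Scope ring_scope.

Definition letter := (bool * bool)%type.
Definition R0 : letter := (false,false).
Definition R1 : letter := (false,true).
Definition E0 : letter := (true,false).
Definition E1 : letter := (true,true).

Section Ev.
Variables (A : pzRingType) (d dinv r0 r1 e0 e1 : A).
Hypothesis H : br_rels d dinv r0 r1 e0 e1.

Definition lt (l : letter) : A :=
  if l.1 then (if l.2 then e1 else e0) else (if l.2 then r1 else r0).
Definition ev (w : seq letter) : A := foldr (fun l acc => lt l * acc) 1 w.
Definition evR (u : seq bool) := ev (map (pair false) u).

Lemma ev_cat u v : ev (u ++ v) = ev u * ev v.
Proof. elim: u => [|x u IH] /=; first by rewrite mul1r. by rewrite IH mulrA. Qed.

Definition cc := r0 * r1.
Definition cc' := r1 * r0.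
Definition rb (b : bool) := if b then r0 else 1.

Lemma dcomm x : d * x = x * d.
Proof. by case: H => _ [_ [h _]]. Qed.
Lemma dncomm n x : d ^+ n * x = x * d ^+ n.
Proof. elim: n => [|n IH]; first by rewrite expr0 mul1r mulr1.
by rewrite exprS -mulrA IH mulrA dcomm -mulrA. Qed.

Lemma r0r0 : r0 * r0 = 1. Proof. by case: H => _ [_ [_ [h _]]]. Qed.
Lemma r1r1 : r1 * r1 = 1. Proof. by case: H => _ [_ [_ [_ [h _]]]]. Qed.
Lemma cc'6 : cc' ^+ 6 = 1.
Proof. by case: H => _ [_ [_ [_ [_ [_ [_ [_ [_ [_ [_ [_ [_ [_ [_ [_ [_ h]]]]]]]]]]]]]]]]. Qed.

Lemma ccc' : cc * cc' = 1.
Proof. by rewrite /cc /cc' mulrA -(mulrA r0) r1r1 mulr1 r0r0. Qed.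
Lemma cc'c : cc' * cc = 1.
Proof. by rewrite /cc /cc' mulrA -(mulrA r1) r0r0 mulr1 r1r1. Qed.
Lemma powinv (a b : A) n : a * b = 1 -> b * a = 1 -> a ^+ n * b ^+ n = 1.
Proof. move=> h1 h2; elim: n => [|n IH]; first by rewrite !expr0 mulr1.
by rewrite exprSr exprS mulrA -(mulrA _ a) h1 mulr1 IH. Qed.
Lemma cc6 : cc ^+ 6 = 1.
Proof. by have := @powinv _ _ 6 ccc' cc'c; rewrite cc'6 mulr1. Qed.
Lemma cc'5 : cc' = cc ^+ 5.
Proof. by rewrite -[LHS]mul1r -cc6 exprSr -mulrA ccc' mulr1. Qed.
Lemma ccmod n : cc ^+ n = cc ^+ (n %% 6).
Proof. by rewrite {1}(divn_eq n 6) exprD mulnC exprM cc6 expr1n mul1r. Qed.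
Lemma r0cc : r0 * cc = cc' * r0.
Proof. by rewrite /cc /cc' mulrA r0r0 mul1r -mulrA r0r0 mulr1. Qed.
Lemma r0ccn m : r0 * cc ^+ m = cc ^+ (5 * m) * r0.
Proof. rewrite exprM -cc'5; elim: m => [|m IH]; first by rewrite !expr0 mulr1 mul1r.
by rewrite exprSr mulrA IH -mulrA r0cc mulrA -exprSr. Qed.
Lemma r1e : r1 = cc' * r0.
Proof. by rewrite /cc' -mulrA r0r0 mulr1. Qed.

Definition rep (mb : nat * bool) : seq bool :=
  flatten (nseq mb.1 [:: false; true]) ++ (if mb.2 then [:: false] else [::]).
Fixpoint nf (u : seq bool) : nat * bool :=
  match u with
  | [::] => (0%N, false)
  | x :: u' => let mb := nf u' in
     if x then ((11 - mb.1) %% 6, ~~ mb.2)%N else ((6 - mb.1) %% 6, ~~ mb.2)%N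
  end.

Lemma evR_rep mb : evR (rep mb) = cc ^+ mb.1 * rb mb.2.
Proof. case: mb => m b; rewrite /evR /rep map_cat ev_cat /=.
congr (_ * _); last by case: b => /=; rewrite ?mulr1.
elim: m => [|m IH] //=. by rewrite IH exprS mulrA. Qed.

Lemma nf_ok u : ((nf u).1 < 6)%N /\ evR u = cc ^+ (nf u).1 * rb (nf u).2.
Proof.
elim: u => [|x u [IH1 IH2]]; first by rewrite /= mul1r.
rewrite /evR /= -/(evR u) IH2; case: (nf u) IH1 => m b /= hm.
have rbK : r0 * rb b = rb (~~ b) by case: b => /=; rewrite ?r0r0 ?mulr1.
have key : r0 * (cc ^+ m * rb b) = cc ^+ (5 * m) * rb (~~ b)
  by rewrite mulrA r0ccn -mulrA rbK.
case: x => /=; split; rewrite ?ltn_mod //; rewrite /lt /=.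
- rewrite r1e cc'5 -mulrA key mulrA -exprD ccmod.
  by clear key; congr (_ ^+ _ * _); move: hm; do 6 (case: m => [|m] //).
- rewrite key ccmod.
  by clear key; congr (_ ^+ _ * _); move: hm; do 6 (case: m => [|m] //).
Qed.

Fixpoint canon_aux (acc : seq bool) (w : seq letter) : seq letter :=
  match w with
  | [::] => map (pair false) (rep (nf acc))
  | l :: w' => if l.1 then map (pair false) (rep (nf acc)) ++ l :: canon_aux [::] w'
               else canon_aux (rcons acc l.2) w'
  end.

Lemma evR_nf acc : evR (rep (nf acc)) = evR acc.
Proof. by rewrite evR_rep (proj2 (nf_ok acc)). Qed.

Lemma canon_auxE acc w : ev (canon_aux acc w) = evR acc * ev w.
Proof.
elim: w acc => [|l w IH] acc /=.
  by rewrite -/(evR _) evR_nf mulr1.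
case: l => [[] x] /=.
- by rewrite ev_cat -/(evR _) evR_nf /= IH /evR /= mul1r.
- rewrite IH /evR map_rcons -cats1 ev_cat -mulrA; congr (_ * _) => /=.
  by rewrite mulr1.
Qed.

Definition canon w := canon_aux [::] w.
Lemma canonE w : ev (canon w) = ev w.
Proof. by rewrite /canon canon_auxE /evR /= mul1r. Qed.

Definition rule := (seq letter * seq letter * nat)%type.
Definition rules : seq rule :=
  [:: ([:: R0; E0], [:: E0], 0%N);
      ([:: E0; R0], [:: E0], 0%N);
      ([:: R1; E1], [:: E1], 0%N);
      ([:: E1; R1], [:: E1], 0%N);
      ([:: E0; E0], [:: E0], 3%N);
      ([:: E1; E1], [:: E1], 1%N);
      ([:: R0; E1; E0], [:: R1; E0], 0%N);
      ([:: E0; E1; R0], [:: E0; R1], 0%N);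
      ([:: E1; R0; E1; R0; E1], [:: E1], 0%N);
      ([:: E1; R0; E1; R0; R1], [:: E1; R0; R1; R0], 0%N);
      ([:: E0; R1; E0], [:: E0], 2%N);
      ([:: R1; R0; E1; R0; E1], [:: R0; R1; R0; E1], 0%N)].
Definition rdef : rule := ([::], [::], 0%N).

Lemma rules_ok idx : let: (l, r, n) := nth rdef rules idx in ev l = d ^+ n * ev r.
Proof.
case: H => _ [_ [_ [_ [_ [h1 [h2 [h3 [h4 [h5 [h6 [h7 [h8 [h9 [h10 [h11 [h12 _]]]]]]]]]]]]]]]].
do 12 (case: idx => [|idx]; first by rewrite /= ?mulr1 ?mul1r ?mulrA ?expr1 //).
by rewrite /= nth_nil /= mul1r.
Qed.
End Ev.

Definition apply_rw (w : seq letter) (pos : nat) (l r : seq letter) : option (seq letter) :=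
  if take (size l) (drop pos w) == l then Some (take pos w ++ r ++ drop (pos + size l) w)
  else None.

Inductive step := Rw of nat & nat & bool | Gp of seq letter.

Definition check_step (w : seq letter) (s : step) : option (nat * seq letter) :=
  match s with
  | Rw pos idx dir =>
      let: (l, r, n) := nth rdef rules idx in
      if dir then (if n == 0%N then omap (pair 0%N) (apply_rw w pos r l) else None)
      else omap (pair n) (apply_rw w pos l r)
  | Gp w' => if canon w == canon w' then Some (0%N, w') else None
  end.

Fixpoint check (w : seq letter) (ss : seq step) : option (nat * seq letter) :=
  match ss with
  | [::] => Some (0%N, w)
  | s :: ss' => match check_step w s with
                | Some (n, w1) => match check w1 ss' with
                                  | Some (n2, w2) => Some ((n + n2)%N, w2)
                                  | None => None end
                | None => None end
  end.

Section Sound.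
Variables (A : pzRingType) (d dinv r0 r1 e0 e1 : A).
Hypothesis H : br_rels d dinv r0 r1 e0 e1.
Local Notation ev := (@ev A r0 r1 e0 e1).
Let dncomm' := @dncomm _ _ _ _ _ _ _ H.
Let rules_ok' := @rules_ok _ _ _ _ _ _ _ H.
Let canonE' := @canonE _ _ _ _ _ _ _ H.

Lemma apply_rwE w pos l r w' n : ev l = d ^+ n * ev r -> apply_rw w pos l r = Some w' ->
  ev w = d ^+ n * ev w'.
Proof.
rewrite /apply_rw => hl; case: eqP => // ht [<-].
rewrite -{1}(cat_take_drop pos w) -{1}(cat_take_drop (size l) (drop pos w)) ht.
rewrite drop_drop addnC !ev_cat hl !mulrA; congr (_ * _).
by rewrite dncomm'.
Qed.

Lemma check_stepE w s n w' : check_step w s = Some (n, w') -> ev w = d ^+ n * ev w'.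
Proof.
case: s => [pos idx dir|w2] /=.
- have := rules_ok' idx; case: (nth _ _ _) => [[l r] m] hr.
  case: dir.
  + case: eqP => // hm; subst m.
    case E: apply_rw => [w3|] //= [hn hw]; subst n w3.
    apply: (@apply_rwE _ _ _ _ _ 0 _ E). by rewrite hr expr0 !mul1r.
  + case E: apply_rw => [w3|] //= [hn hw]; subst n w3; exact: apply_rwE E.
- case: eqP => // hc [hn hw]; subst n w2. by rewrite -(canonE' w) hc canonE' expr0 mul1r.
Qed.

Lemma checkE w ss n w' : check w ss = Some (n, w') -> ev w = d ^+ n * ev w'.
Proof.
elim: ss w n => [|s ss IH] w n /=; first by case=> <- <-; rewrite expr0 mul1r.
case E: check_step => [[n1 w1]|] //; case E2: check => [[n2 w2]|] // [hn hw].
subst n w2.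
by rewrite (@check_stepE _ _ _ _ E) (IH _ _ E2) mulrA -exprD.
Qed.
End Sound.

Definition cert (k b i : bool) (m : nat) : seq step * nat * seq bool * bool * seq bool :=
  match k, b, i, m with
  | false, false, false, 0 => ([:: (Gp [:: E0; E0]);
      (Rw 0 4 false);
      (Gp [:: E0])], 3%N, [::], false, [::])
  | false, false, false, 1 => ([:: (Gp [:: E0; R0; R0; R1; R0; R1; R0; R1; R0; R1; R0; R1; R0; E0]);
      (Rw 0 1 false);
      (Gp [:: E0; R1; E0]);
      (Rw 0 10 false);
      (Gp [:: E0])], 2%N, [::], false, [::])
  | false, false, false, 2 => ([:: (Gp [:: E0; R0; R1; R0; R1; E0]);
      (Rw 4 6 true);
      (Gp [:: E0; R0; R1; E1; E0]);
      (Rw 2 2 false);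
      (Gp [:: E0; R0; E1; E0]);
      (Rw 1 6 false);
      (Gp [:: E0; R1; E0]);
      (Rw 0 10 false);
      (Gp [:: E0])], 2%N, [::], false, [::])
  | false, false, false, 3 => ([:: (Gp [:: E0; R0; R1; R0; R1; R0; R1; R0; R0; E0]);
      (Rw 8 0 false);
      (Gp [:: E0; R0; R1; R0; R1; R0; R1; R0; R1; R1; E0]);
      (Rw 9 6 true);
      (Gp [:: E0; R0; R1; R0; R1; R0; R1; R0; R1; R0; R1; R1; E1; E0]);
      (Rw 11 2 false);
      (Gp [:: E0; R0; R1; R0; R1; R0; R1; R0; R1; R0; R1; R0; R0; E1; E0]);
      (Rw 12 6 false);
      (Gp [:: E0; E0]);
      (Rw 0 4 false);
      (Gp [:: E0])], 3%N, [::], false, [::])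
  | false, false, false, 4 => ([:: (Gp [:: E0; R1; R0; R1; R0; E0]);
      (Rw 0 7 true);
      (Gp [:: E0; E1; R1; R0; E0]);
      (Rw 1 3 false);
      (Gp [:: E0; E1; R0; E0]);
      (Rw 0 7 false);
      (Gp [:: E0; R1; E0]);
      (Rw 0 10 false);
      (Gp [:: E0])], 2%N, [::], false, [::])
  | false, false, false, 5 => ([:: (Gp [:: E0; R0; R1; R0; R1; R0; R1; R0; R1; R0; R1; R0; R0; E0]);
      (Rw 12 0 false);
      (Gp [:: E0; R1; E0]);
      (Rw 0 10 false);
      (Gp [:: E0])], 2%N, [::], false, [::])
  | false, false, true, 0 => ([:: (Gp [:: E0; E1; R0; R0]);
      (Rw 0 7 false);
      (Gp [:: E0; R0; R1; R0; R1; R0; R1; R0; R1; R0; R1])], 0%N, [::], false, [:: false; true; false; true; false; true; false; true; false; true])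
  | false, false, true, 1 => ([:: (Gp [:: E0; R0; R0; R1; R0; R1; R0; R1; R0; R1; R0; R1; R0; E1]);
      (Rw 0 1 false);
      (Gp [:: E0; R1; E1]);
      (Rw 1 2 false);
      (Gp [:: E0; E1; R0; R0]);
      (Rw 0 7 false);
      (Gp [:: E0; R0; R1; R0; R1; R0; R1; R0; R1; R0; R1])], 0%N, [::], false, [:: false; true; false; true; false; true; false; true; false; true])
  | false, false, true, 2 => ([:: (Gp [:: E0; R0; R0; R1; R0; R1; R0; R1; R0; R1; R0; E1]);
      (Rw 0 1 false);
      (Gp [:: E0; R0; R1; R0; R1; R0; R1; R0; R1; R0; R1; R1; E1]);
      (Rw 11 2 false);
      (Gp [:: E0; R1; R0; E1]);
      (Rw 0 7 true);
      (Gp [:: E0; E1; E1]);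
      (Rw 1 5 false);
      (Gp [:: E0; E1; R0; R0]);
      (Rw 0 7 false);
      (Gp [:: E0; R0; R1; R0; R1; R0; R1; R0; R1; R0; R1])], 1%N, [::], false, [:: false; true; false; true; false; true; false; true; false; true])
  | false, false, true, 3 => ([:: (Gp [:: E0; R0; R1; R0; R1; R0; R1; E1]);
      (Rw 6 2 false);
      (Gp [:: E0; R0; R1; R0; R1; R0; E1; R0; R1; R0; R0; R1; R0]);
      (Rw 6 9 true);
      (Gp [:: E0; R0; R1; R0; R1; R0; E1; R0; E1; R0; R1; R0; R1; R0]);
      (Rw 4 11 false);
      (Gp [:: E0; E1; R0; R0; R1; R0; R1; R0; R1; R0; R1]);
      (Rw 0 7 false);
      (Gp [:: E0; R0; R1; R0])], 0%N, [::], false, [:: false; true; false])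
  | false, false, true, 4 => ([:: (Gp [:: E0; R0; R0; R1; R0; R1; R0; E1]);
      (Rw 0 1 false);
      (Gp [:: E0; R0; R1; R0; R1; R0; E1; R0; R1; R0; R0; R1; R0]);
      (Rw 6 9 true);
      (Gp [:: E0; R0; R1; R0; R1; R0; E1; R0; E1; R0; R1; R0; R1; R0]);
      (Rw 4 11 false);
      (Gp [:: E0; E1; R0; R0; R1; R0; R1; R0; R1; R0; R1]);
      (Rw 0 7 false);
      (Gp [:: E0; R0; R1; R0])], 0%N, [::], false, [:: false; true; false])
  | false, false, true, 5 => ([:: (Gp [:: E0; R1; R0; E1]);
      (Rw 0 7 true);
      (Gp [:: E0; E1; E1]);
      (Rw 1 5 false);
      (Gp [:: E0; E1; R0; R0]);
      (Rw 0 7 false);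
      (Gp [:: E0; R0; R1; R0; R1; R0; R1; R0; R1; R0; R1])], 1%N, [::], false, [:: false; true; false; true; false; true; false; true; false; true])
  | false, true, false, 0 => ([:: (Gp [:: E0; R0; E0]);
      (Rw 1 0 false);
      (Gp [:: E0; E0]);
      (Rw 0 4 false);
      (Gp [:: E0])], 3%N, [::], false, [::])
  | false, true, false, 1 => ([:: (Gp [:: E0; R0; R1; R0; E0]);
      (Rw 3 0 false);
      (Gp [:: E0; R0; R0; R1; R0; R1; R0; R1; R0; R1; R0; R1; R0; E0]);
      (Rw 0 1 false);
      (Gp [:: E0; R1; E0]);
      (Rw 0 10 false);
      (Gp [:: E0])], 2%N, [::], false, [::])
  | false, true, false, 2 => ([:: (Gp [:: E0; R0; R1; R0; R1; R0; E0]);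
      (Rw 5 0 false);
      (Gp [:: E0; R0; R1; R0; R1; E0]);
      (Rw 4 6 true);
      (Gp [:: E0; R0; R1; E1; E0]);
      (Rw 2 2 false);
      (Gp [:: E0; R0; E1; E0]);
      (Rw 1 6 false);
      (Gp [:: E0; R1; E0]);
      (Rw 0 10 false);
      (Gp [:: E0])], 2%N, [::], false, [::])
  | false, true, false, 3 => ([:: (Gp [:: E0; R0; R1; R0; R1; R0; R1; R0; R1; R1; E0]);
      (Rw 9 6 true);
      (Gp [:: E0; R0; R1; R0; R1; R0; R1; R0; R1; R0; R1; R1; E1; E0]);
      (Rw 11 2 false);
      (Gp [:: E0; R0; R1; R0; R1; R0; R1; R0; R1; R0; R1; R0; R0; E1; E0]);
      (Rw 12 6 false);
      (Gp [:: E0; E0]);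
      (Rw 0 4 false);
      (Gp [:: E0])], 3%N, [::], false, [::])
  | false, true, false, 4 => ([:: (Gp [:: E0; R0; R1; R0; R1; R0; R1; R0; R1; R0; E0]);
      (Rw 9 0 false);
      (Gp [:: E0; R1; R0; R1; R0; E0]);
      (Rw 0 7 true);
      (Gp [:: E0; E1; R1; R0; E0]);
      (Rw 1 3 false);
      (Gp [:: E0; E1; R0; E0]);
      (Rw 0 7 false);
      (Gp [:: E0; R1; E0]);
      (Rw 0 10 false);
      (Gp [:: E0])], 2%N, [::], false, [::])
  | false, true, false, 5 => ([:: (Gp [:: E0; R1; E0]);
      (Rw 0 10 false);
      (Gp [:: E0])], 2%N, [::], false, [::])
  | false, true, true, 0 => ([:: (Gp [:: E0; R0; E1]);
      (Rw 0 1 false);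
      (Gp [:: E0; E1; R0; R0]);
      (Rw 0 7 false);
      (Gp [:: E0; R0; R1; R0; R1; R0; R1; R0; R1; R0; R1])], 0%N, [::], false, [:: false; true; false; true; false; true; false; true; false; true])
  | false, true, true, 1 => ([:: (Gp [:: E0; R0; R0; R1; R0; R1; R0; R1; R0; R1; R0; R1; E1]);
      (Rw 0 1 false);
      (Gp [:: E0; R1; R0; E1]);
      (Rw 0 7 true);
      (Gp [:: E0; E1; E1]);
      (Rw 1 5 false);
      (Gp [:: E0; E1; R0; R0]);
      (Rw 0 7 false);
      (Gp [:: E0; R0; R1; R0; R1; R0; R1; R0; R1; R0; R1])], 1%N, [::], false, [:: false; true; false; true; false; true; false; true; false; true])
  | false, true, true, 2 => ([:: (Gp [:: E0; R0; R1; R0; R1; R0; E1; R0; R1; R0; R0; R1; R0]);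
      (Rw 6 9 true);
      (Gp [:: E0; R0; R1; R0; R1; R0; E1; R0; E1; R0; R1; R0; R1; R0]);
      (Rw 4 11 false);
      (Gp [:: E0; E1; R0; R0; R1; R0; R1; R0; R1; R0; R1]);
      (Rw 0 7 false);
      (Gp [:: E0; R0; R1; R0])], 0%N, [::], false, [:: false; true; false])
  | false, true, true, 3 => ([:: (Gp [:: E0; R1; R0; R1; R0; R1; E1]);
      (Rw 0 7 true);
      (Gp [:: E0; E1; R1; R0; R1; E1]);
      (Rw 1 3 false);
      (Gp [:: E0; E1; R0; R0; R1; R0; R1; R0; R1; R0; R1; R0; R1; R0; E1]);
      (Rw 0 7 false);
      (Gp [:: E0; E1; R0; R0]);
      (Rw 0 7 false);
      (Gp [:: E0; R0; R1; R0; R1; R0; R1; R0; R1; R0; R1])], 0%N, [::], false, [:: false; true; false; true; false; true; false; true; false; true])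
  | false, true, true, 4 => ([:: (Gp [:: E0; R0; R1; R0; R1; R0; R1; R0; R1; R0; R1; R1; E1]);
      (Rw 11 2 false);
      (Gp [:: E0; R1; R0; E1]);
      (Rw 0 7 true);
      (Gp [:: E0; E1; E1]);
      (Rw 1 5 false);
      (Gp [:: E0; E1; R0; R0]);
      (Rw 0 7 false);
      (Gp [:: E0; R0; R1; R0; R1; R0; R1; R0; R1; R0; R1])], 1%N, [::], false, [:: false; true; false; true; false; true; false; true; false; true])
  | false, true, true, 5 => ([:: (Gp [:: E0; R1; E1]);
      (Rw 1 2 false);
      (Gp [:: E0; E1; R0; R0]);
      (Rw 0 7 false);
      (Gp [:: E0; R0; R1; R0; R1; R0; R1; R0; R1; R0; R1])], 0%N, [::], false, [:: false; true; false; true; false; true; false; true; false; true])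
  | true, false, false, 0 => ([:: (Gp [:: R0; R0; E1; E0]);
      (Rw 1 6 false);
      (Gp [:: R0; R1; E0])], 0%N, [:: false; true], false, [::])
  | true, false, false, 1 => ([:: (Gp [:: E1; R0; R1; E0]);
      (Rw 2 6 true);
      (Gp [:: E1; E1; E0]);
      (Rw 0 5 false);
      (Gp [:: R0; R0; E1; E0]);
      (Rw 1 6 false);
      (Gp [:: R0; R1; E0])], 1%N, [:: false; true], false, [::])
  | true, false, false, 2 => ([:: (Gp [:: E1; R0; R1; R0; R1; R0; R0; E0]);
      (Rw 6 0 false);
      (Gp [:: E1; R0; R1; R0; R0; R1; R0; R1; R0; R1; R0; R1; R0; R1; E0]);
      (Rw 0 9 true);
      (Gp [:: R0; R1; R1; R0; E1; R0; E1; E0]);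
      (Rw 2 11 false);
      (Gp [:: R0; R1; R0; R1; R0; E1; E0]);
      (Rw 4 6 false);
      (Gp [:: R0; R1; R0; E0])], 0%N, [:: false; true; false], false, [::])
  | true, false, false, 3 => ([:: (Gp [:: E1; R1; R0; R1; R0; R1; R0; E0]);
      (Rw 0 3 false);
      (Gp [:: E1; R0; R1; R0; R0; R1; R0; R1; R0; R1; R0; R1; R0; R1; E0]);
      (Rw 0 9 true);
      (Gp [:: R0; R1; R1; R0; E1; R0; E1; E0]);
      (Rw 2 11 false);
      (Gp [:: R0; R1; R0; R1; R0; E1; E0]);
      (Rw 4 6 false);
      (Gp [:: R0; R1; R0; E0])], 0%N, [:: false; true; false], false, [::])
  | true, false, false, 4 => ([:: (Gp [:: E1; R0; R1; R0; R1; R0; R1; R0; R1; R0; R0; E0]);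
      (Rw 10 0 false);
      (Gp [:: E1; R1; R0; R1; E0]);
      (Rw 0 3 false);
      (Gp [:: E1; R0; R1; E0]);
      (Rw 2 6 true);
      (Gp [:: E1; E1; E0]);
      (Rw 0 5 false);
      (Gp [:: R0; R0; E1; E0]);
      (Rw 1 6 false);
      (Gp [:: R0; R1; E0])], 1%N, [:: false; true], false, [::])
  | true, false, false, 5 => ([:: (Gp [:: E1; R0; R1; R0; R1; R0; R1; R0; R1; R0; R1; R0; R0; E0]);
      (Rw 12 0 false);
      (Gp [:: E1; R1; E0]);
      (Rw 0 3 false);
      (Gp [:: R0; R0; E1; E0]);
      (Rw 1 6 false);
      (Gp [:: R0; R1; E0])], 0%N, [:: false; true], false, [::])
  | true, false, true, 0 => ([:: (Gp [:: E1; E1]);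
      (Rw 0 5 false);
      (Gp [:: E1])], 1%N, [::], true, [::])
  | true, false, true, 1 => ([:: (Gp [:: E1; R0; R1; E1]);
      (Rw 2 2 false);
      (Gp [:: E1; R0; E1; R0; R1; R0; R1; R0; R1; R0; R1; R0; R1; R0; R1]);
      (Rw 0 9 false);
      (Gp [:: E1; R0; R1; R0; R1; R0])], 0%N, [::], true, [:: false; true; false; true; false])
  | true, false, true, 2 => ([:: (Gp [:: E1; R0; R1; R0; R0; R1; R0; R1; R0; R1; R0; R1; R0; R1; R0; E1]);
      (Rw 0 9 true);
      (Gp [:: E1; R0; E1; R0; E1]);
      (Rw 0 8 false);
      (Gp [:: E1])], 0%N, [::], true, [::])
  | true, false, true, 3 => ([:: (Gp [:: E1; R0; R1; R0; R1; R0; R1; E1]);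
      (Rw 6 2 false);
      (Gp [:: E1; R0; R1; R0; R0; R1; R0; R1; R0; R1; R0; R1; R0; R1; E1]);
      (Rw 0 9 true);
      (Gp [:: E1; R0; E1; E1]);
      (Rw 2 5 false);
      (Gp [:: E1; R0; E1; R0; R1; R0; R1; R0; R1; R0; R1; R0; R1; R0; R1]);
      (Rw 0 9 false);
      (Gp [:: E1; R0; R1; R0; R1; R0])], 1%N, [::], true, [:: false; true; false; true; false])
  | true, false, true, 4 => ([:: (Gp [:: E1; R0; R1; R0; R1; R0; R1; R0; R1; R0; R1; R0; R0; R1; R0; E1]);
      (Rw 12 11 true);
      (Gp [:: E1; R0; E1; R0; E1]);
      (Rw 0 8 false);
      (Gp [:: E1])], 0%N, [::], true, [::])
  | true, false, true, 5 => ([:: (Gp [:: E1; R1; R0; E1]);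
      (Rw 0 3 false);
      (Gp [:: E1; R0; E1; R0; R1; R0; R1; R0; R1; R0; R1; R0; R1; R0; R1]);
      (Rw 0 9 false);
      (Gp [:: E1; R0; R1; R0; R1; R0])], 0%N, [::], true, [:: false; true; false; true; false])
  | true, true, false, 0 => ([:: (Gp [:: E1; R0; E0]);
      (Rw 1 0 false);
      (Gp [:: R0; R0; E1; E0]);
      (Rw 1 6 false);
      (Gp [:: R0; R1; E0])], 0%N, [:: false; true], false, [::])
  | true, true, false, 1 => ([:: (Gp [:: E1; R0; R1; R0; E0]);
      (Rw 3 0 false);
      (Gp [:: E1; R0; R1; E0]);
      (Rw 2 6 true);
      (Gp [:: E1; E1; E0]);
      (Rw 0 5 false);
      (Gp [:: R0; R0; E1; E0]);
      (Rw 1 6 false);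
      (Gp [:: R0; R1; E0])], 1%N, [:: false; true], false, [::])
  | true, true, false, 2 => ([:: (Gp [:: E1; R0; R1; R0; R0; R1; R0; R1; R0; R1; R0; R1; R0; R1; E0]);
      (Rw 0 9 true);
      (Gp [:: R0; R1; R1; R0; E1; R0; E1; E0]);
      (Rw 2 11 false);
      (Gp [:: R0; R1; R0; R1; R0; E1; E0]);
      (Rw 4 6 false);
      (Gp [:: R0; R1; R0; E0])], 0%N, [:: false; true; false], false, [::])
  | true, true, false, 3 => ([:: (Gp [:: E1; R0; R1; R0; R1; R0; R1; R0; R1; R1; E0]);
      (Rw 9 6 true);
      (Gp [:: E1; R0; R1; R0; R1; R0; R1; R0; R1; R0; R1; R1; E1; E0]);
      (Rw 11 2 false);
      (Gp [:: E1; R0; R1; R0; R1; R0; R1; R0; R1; R0; R1; R0; R0; E1; E0]);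
      (Rw 12 6 false);
      (Gp [:: R0; R0; E1; E0]);
      (Rw 1 6 false);
      (Gp [:: R0; R1; E0])], 0%N, [:: false; true], false, [::])
  | true, true, false, 4 => ([:: (Gp [:: E1; R1; R0; R1; E0]);
      (Rw 0 3 false);
      (Gp [:: E1; R0; R1; E0]);
      (Rw 2 6 true);
      (Gp [:: E1; E1; E0]);
      (Rw 0 5 false);
      (Gp [:: R0; R0; E1; E0]);
      (Rw 1 6 false);
      (Gp [:: R0; R1; E0])], 1%N, [:: false; true], false, [::])
  | true, true, false, 5 => ([:: (Gp [:: E1; R1; E0]);
      (Rw 0 3 false);
      (Gp [:: R0; R0; E1; E0]);
      (Rw 1 6 false);
      (Gp [:: R0; R1; E0])], 0%N, [:: false; true], false, [::])
  | true, true, true, 0 => ([:: (Gp [:: E1; R0; E1; R0; R1; R0; R1; R0; R1; R0; R1; R0; R1; R0; R1]);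
      (Rw 0 9 false);
      (Gp [:: E1; R0; R1; R0; R1; R0])], 0%N, [::], true, [:: false; true; false; true; false])
  | true, true, true, 1 => ([:: (Gp [:: E1; R0; R1; R0; R1; R1; E1]);
      (Rw 5 2 false);
      (Gp [:: E1; R0; R1; R0; R0; R1; R0; R1; R0; R1; R0; R1; R0; R1; R0; E1]);
      (Rw 0 9 true);
      (Gp [:: E1; R0; E1; R0; E1]);
      (Rw 0 8 false);
      (Gp [:: E1])], 0%N, [::], true, [::])
  | true, true, true, 2 => ([:: (Gp [:: E1; R0; R1; R0; R0; R1; R0; R1; R0; R1; R0; R1; R0; R1; E1]);
      (Rw 0 9 true);
      (Gp [:: E1; R0; E1; E1]);
      (Rw 2 5 false);
      (Gp [:: E1; R0; E1; R0; R1; R0; R1; R0; R1; R0; R1; R0; R1; R0; R1]);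
      (Rw 0 9 false);
      (Gp [:: E1; R0; R1; R0; R1; R0])], 1%N, [::], true, [:: false; true; false; true; false])
  | true, true, true, 3 => ([:: (Gp [:: E1; R0; R1; R0; R1; R0; R1; R0; R1; R1; E1]);
      (Rw 9 2 false);
      (Gp [:: E1; R0; R1; R0; R1; R0; R1; R0; R1; R0; R1; R0; R0; R1; R0; E1]);
      (Rw 12 11 true);
      (Gp [:: E1; R0; E1; R0; E1]);
      (Rw 0 8 false);
      (Gp [:: E1])], 0%N, [::], true, [::])
  | true, true, true, 4 => ([:: (Gp [:: E1; R0; R1; R0; R1; R0; R1; R0; R1; R0; R1; R1; E1]);
      (Rw 11 2 false);
      (Gp [:: E1; R1; R0; E1]);
      (Rw 0 3 false);
      (Gp [:: E1; R0; E1; R0; R1; R0; R1; R0; R1; R0; R1; R0; R1; R0; R1]);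
      (Rw 0 9 false);
      (Gp [:: E1; R0; R1; R0; R1; R0])], 0%N, [::], true, [:: false; true; false; true; false])
  | true, true, true, 5 => ([:: (Gp [:: E1; R1; E1]);
      (Rw 1 2 false);
      (Gp [:: E1; E1]);
      (Rw 0 5 false);
      (Gp [:: E1])], 1%N, [::], true, [::])
  | _, _, _, _ => ([::], 0%N, [::], false, [::])
  end.

Definition start (k b i : bool) (m : nat) : seq letter :=
  (true, k) :: map (pair false) (rep (m, b)) ++ [:: (true, i)].

Lemma cert_ok k b i m : (m < 6)%N ->
  let: (ss, t, a1, j, a2) := cert k b i m in
  check (start k b i m) ss = Some (t, map (pair false) a1 ++ (true, j) :: map (pair false) a2).
Proof.
by case: k; case: b; case: i; do 6 (case: m => [|m]; first by vm_compute).
Qed.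

Lemma nf_lt6 u : ((nf u).1 < 6)%N.
Proof. by case: u => [|[] u] //=; rewrite ltn_mod. Qed.

Definition i2b (i : 'I_2) : bool := i != ord0.
Definition b2i (b : bool) : 'I_2 := if b then ord_max else ord0.
Lemma i2bK : cancel b2i i2b. Proof. by case. Qed.
Lemma gen_i2b (A : pzRingType) (x0 x1 : A) i : gen x0 x1 i = if i2b i then x1 else x0.
Proof. by rewrite /gen /i2b; case: (i == ord0). Qed.
Lemma wev_evR (A : pzRingType) (r0 r1 e0 e1 : A) w :
  wev r0 r1 w = evR A r0 r1 e0 e1 (map i2b w).
Proof.
elim: w => [|x w IH]; first by rewrite /wev big_nil.
by rewrite /wev big_cons -/(wev r0 r1 w) IH gen_i2b.
Qed.

Theorem lemma9p6 :
  forall (beta : G2root), beta \in pos_roots ->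
  forall (w : seq 'I_2) (k : 'I_2), wact w (simple_root k) = beta ->
  forall (i : 'I_2),
  exists (a1 a2 : seq 'I_2) (j : 'I_2) (t : int),
    forall (A : pzRingType) (d dinv r0 r1 e0 e1 : A),
      br_rels d dinv r0 r1 e0 e1 ->
      ebeta r0 r1 e0 e1 w k * gen e0 e1 i
      = dpow d dinv t * wev r0 r1 a1 * gen e0 e1 j * wev r0 r1 a2.
Proof.
move=> beta _ w k _ i.
set u := map i2b (rev w).
have C := @cert_ok (i2b k) (nf u).2 (i2b i) (nf u).1 (nf_lt6 u).
case: (cert _ _ _ _) C => [[[[ss t] a1] j] a2] C.
exists (w ++ map b2i a1), (map b2i a2), (b2i j), (Posz t).
move=> A d dinv r0 r1 e0 e1 H.
have E := @checkE _ _ _ _ _ _ _ H _ _ _ _ C.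
rewrite /start /= ev_cat /= ev_cat /= !mulr1 -/(evR _ _ _ _ _ _) in E.
rewrite -(surjective_pairing (nf u)) evR_rep -(proj2 (@nf_ok _ _ _ _ _ _ _ H u)) in E.
rewrite /ebeta /= !(wev_evR _ _ _ e0 e1) map_cat (mapK i2bK) /evR map_cat ev_cat -/(evR _ _ _ _ _ _).
rewrite !gen_i2b i2bK (mapK i2bK a2) -/u.
rewrite /lt /= in E.
rewrite -!mulrA -/(evR A r0 r1 e0 e1 u) E.
by rewrite !mulrA (@dncomm _ _ _ _ _ _ _ H).
Qed.
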